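(* For every $n\ge2$, $$\sum_{k=1}^{n-1}k^2\,d_{k,n}=(4n-1)(2n-3)!!-3(2n-2)!!.$$
   Context: $\mathcal{T}_n$ is the set of fully resolved (binary) rooted trees with leaves bijectively labeled by $\{1,\dots,n\}$, and $d_{k,n}=|\{T\in\mathcal{T}_n:\delta_T(1)=k\}|$, where $\delta_T(1)$ is the depth (number of arcs from the root) of leaf $1$ in $T$. Double factorials: $(2m-1)!!=(2m-1)(2m-3)\cdots1$, $(2m)!!=(2m)(2m-2)\cdots2$, $0!!=1$. *)

(* Defs.v *)
From HB Require Import structures.
From mathcomp Require Import all_boot all_order all_algebra.
Set Implicit Arguments. Unset Strict Implicit. Unset Printing Implicit Defensive.

Inductive tree := Leaf of nat | Node of tree & tree.

Fixpoint tree_eqb (t u : tree) : bool :=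
  match t, u with
  | Leaf a, Leaf b => a == b
  | Node l r, Node l' r' => tree_eqb l l' && tree_eqb r r'
  | _, _ => false
  end.

Lemma tree_eqP : Equality.axiom tree_eqb.
Proof.
elim=> [a|l IHl r IHr] [b|l' r'] /=; try by constructor.
- by apply: (iffP eqP) => [->|[]].
- by case: (IHl l') => [<-|Hn]; case: (IHr r') => [<-|Hn'];
     constructor => //; case.
Qed.

HB.instance Definition _ := hasDecEq.Build tree tree_eqP.

Fixpoint leaves (t : tree) : seq nat :=
  match t with Leaf a => [:: a] | Node l r => leaves l ++ leaves r end.

Definition minleaf (t : tree) : nat := foldr minn (head 0 (leaves t)) (leaves t).

(* Children of a node are unordered: we pick the canonical orientation in
   which the left child contains the smaller minimum label. With distinct
   labels this gives a bijection between ordered trees in canonical form and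
   (unordered) rooted binary trees. *)
Fixpoint canon (t : tree) : bool :=
  match t with
  | Leaf _ => true
  | Node l r => [&& minleaf l < minleaf r, canon l & canon r]
  end.

(* t is in T_n: a fully resolved rooted tree whose leaves are bijectively
   labelled by {1,...,n}. *)
Definition in_Tn (n : nat) (t : tree) : bool :=
  perm_eq (leaves t) (iota 1 n) && canon t.

Fixpoint depth (x : nat) (t : tree) : nat :=
  match t with
  | Leaf _ => 0
  | Node l r => if x \in leaves l then (depth x l).+1 else (depth x r).+1
  end.

Definition enum_Tn (n : nat) (s : seq tree) : Prop :=
  uniq s /\ forall t, (t \in s) = in_Tn n t.

Definition dkn (s : seq tree) (k : nat) : nat :=
  count (fun t => depth 1 t == k) s.

Fixpoint dfact (m : nat) : nat :=
  match m with
  | 0 => 1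
  | 1 => 1
  | (p.+2) as q => q * dfact p
  end.

(* Main.v *)
Require Import Defs.
From HB Require Import structures.
From mathcomp Require Import all_boot all_order all_algebra.
From mathcomp Require Import ring zify.
Import GRing.Theory.

Fixpoint ins (m : nat) (t : tree) : seq tree :=
  Node t (Leaf m) ::
  match t with
  | Leaf _ => [::]
  | Node l r => [seq Node l' r | l' <- ins m l] ++ [seq Node l r' | r' <- ins m r]
  end.

Definition del (m : nat) : tree -> tree :=
  fix del t := match t with
  | Leaf a => Leaf a
  | Node l r => if l == Leaf m then r else if r == Leaf m then l
                else if m \in leaves l then Node (del l) r else Node l (del r)
  end.

Fixpoint gen (n : nat) : seq tree :=
  match n with
  | 0 => [::]
  | 1 => [:: Leaf 1]
  | (k.+1) as n' => flatten [seq ins n' u | u <- gen k]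
  end.

Definition mins (s : seq nat) := foldr minn (head 0 s) s.

Lemma fm_in c s : foldr minn c s \in c :: s.
Proof.
elim: s => [|a s IH] /=; first by rewrite inE.
rewrite /minn; case: ifP => _; first by rewrite !inE eqxx orbT.
move: IH; rewrite !inE => /orP [->//|->]; by rewrite !orbT.
Qed.

Lemma fm_le c s y : y \in c :: s -> (foldr minn c s <= y)%N.
Proof.
elim: s => [|a s IH] /=; first by rewrite inE => /eqP->.
rewrite !inE => /or3P [H|/eqP->|H].
- by rewrite geq_min IH ?inE ?H ?orbT.
- by rewrite geq_min leqnn.
- by rewrite geq_min IH ?inE ?H ?orbT.
Qed.

Lemma mins_in s : s != [::] -> foldr minn (head 0 s) s \in s.
Proof. case: s => // a s _ /=; have := fm_in a (a :: s); rewrite /= inE.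
by case/orP => [/eqP->|//]; rewrite inE eqxx. Qed.

Lemma mins_le s y : y \in s -> (foldr minn (head 0 s) s <= y)%N.
Proof. case: s => // a s H; apply: fm_le; by rewrite inE H orbT. Qed.

Lemma leaves_size t : (0 < size (leaves t))%N.
Proof. elim: t => //= l IHl r IHr; rewrite size_cat; lia. Qed.

Lemma leaves_neq0 t : leaves t != [::].
Proof. by rewrite -size_eq0 -lt0n leaves_size. Qed.

Lemma minleaf_in t : minleaf t \in leaves t.
Proof. exact: mins_in (leaves_neq0 t). Qed.

Lemma minleaf_le t y : y \in leaves t -> (minleaf t <= y)%N.
Proof. exact: mins_le. Qed.

Lemma minleaf_add a b m :
  (forall y, (y \in leaves a) = (y \in leaves b) || (y == m)) ->
  (forall y, y \in leaves b -> (y < m)%N) -> minleaf a = minleaf b.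
Proof.
move=> Hab Hb.
have h1 : minleaf a \in leaves a := minleaf_in a.
have h2 : minleaf b \in leaves b := minleaf_in b.
have h3 : (minleaf a <= minleaf b)%N by apply: minleaf_le; rewrite Hab h2.
move: h1; rewrite Hab => /orP [H|/eqP E].
  by apply/eqP; rewrite eqn_leq h3 minleaf_le.
have := Hb _ h2; lia.
Qed.

Definition isnode (t : tree) := if t is Node _ _ then true else false.

Lemma ins_node m u t : t \in ins m u -> isnode t.
Proof.
case: u => [a|l r] /=; rewrite in_cons => /orP [/eqP->//|] //.
by rewrite mem_cat => /orP [] /mapP [x _ ->].
Qed.

Lemma ins_leaves m u t : t \in ins m u -> perm_eq (leaves t) (rcons (leaves u) m).
Proof.
elim: u t => [a|l IHl r IHr] t /=; rewrite in_cons => /orP [/eqP->|] /=;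
  rewrite ?cats1 //.
rewrite mem_cat => /orP [] /mapP [x Hx ->] /=.
- have := IHl _ Hx; rewrite -(perm_cat2r (leaves r)) => /perm_trans; apply.
  by rewrite -!cats1 -!catA perm_cat2l perm_catC.
- have := IHr _ Hx; rewrite -(perm_cat2l (leaves l)) => /perm_trans; apply.
  by rewrite -!cats1 -!catA.
Qed.

Lemma ins_mem m u t y : t \in ins m u ->
  (y \in leaves t) = (y \in leaves u) || (y == m).
Proof. by move/ins_leaves/perm_mem => ->; rewrite mem_rcons inE orbC. Qed.

Lemma ins_canon m u t : canon u -> (forall y, y \in leaves u -> (y < m)%N) ->
  t \in ins m u -> canon t.
Proof.
elim: u t => [a|l IHl r IHr] t /= Hc Hm; rewrite in_cons => /orP [/eqP->|] /=.
- by rewrite /minleaf /= !minnn !andbT Hm ?inE.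
- by [].
- have -> : minleaf (Leaf m) = m by rewrite /minleaf /= minnn.
  by rewrite Hc andbT (Hm _ (minleaf_in (Node l r))).
move/and3P: Hc => [Hlt Hcl Hcr].
have Hml : forall y, y \in leaves l -> (y < m)%N by move=> y Hy; apply: Hm; rewrite mem_cat Hy.
have Hmr : forall y, y \in leaves r -> (y < m)%N by move=> y Hy; apply: Hm; rewrite mem_cat Hy orbT.
rewrite mem_cat => /orP [] /mapP [x Hx ->] /=.
- rewrite (minleaf_add x l m) // ?Hlt ?Hcr ?(IHl _ Hcl Hml Hx) //.
  by move=> y; apply: ins_mem.
- rewrite (minleaf_add x r m) // ?Hlt ?Hcl ?(IHr _ Hcr Hmr Hx) //.
  by move=> y; apply: ins_mem.
Qed.

Lemma ins_uniq m u : m \notin leaves u -> uniq (ins m u).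
Proof.
elim: u => [a|l IHl r IHr] //= Hm.
rewrite mem_cat negb_or in Hm; case/andP: Hm => Hml Hmr.
rewrite cat_uniq !map_inj_uniq ?IHl ?IHr //; last 2 first.
- by move=> x y [].
- by move=> x y [].
rewrite mem_cat negb_or; apply/and4P; split=> //; first apply/andP; [split|].
- apply/mapP => [[x _ E]]; case: E => _ E; by rewrite -E /= inE eqxx in Hmr.
- apply/mapP => [[x Hx E]]; case: E => _ E; move: (ins_node _ _ _ Hx); by rewrite -E.
- apply/hasPn => z /mapP [x Hx ->]; apply/mapP => [[y Hy E]]; case: E => E _.
  have := ins_mem _ _ _ m Hy; rewrite -E eqxx orbT => /esym.
  by rewrite (negbTE Hml).
Qed.

Lemma del_ins m u t : m \notin leaves u -> t \in ins m u -> del m t = u.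
Proof.
have base : forall u, m \notin leaves u -> del m (Node u (Leaf m)) = u.
  move=> v Hv /=; have Hn : v != Leaf m by apply: contraNneq Hv => ->; rewrite inE.
  by rewrite (negbTE Hn) eqxx.
elim: u t => [a|l IHl r IHr] t Hm; rewrite in_cons => /orP [/eqP->|]; rewrite ?base //.
rewrite /= mem_cat negb_or in Hm; case/andP: Hm => Hml Hmr.
have nl : forall v, m \notin leaves v -> (v == Leaf m) = false.
  by move=> v Hv; apply/negbTE; apply: contraNneq Hv => ->; rewrite inE.
have nn : forall v, isnode v -> (v == Leaf m) = false by case.
rewrite mem_cat => /orP [] /mapP [x Hx ->] /=.
- by rewrite nn ?(ins_node _ _ _ Hx) // nl // (ins_mem _ _ _ m Hx) eqxx orbT (IHl _ Hml Hx).
- by rewrite nl // nn ?(ins_node _ _ _ Hx) // (negbTE Hml) (IHr _ Hmr Hx).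
Qed.

Lemma del_mem m t y : isnode t -> uniq (leaves t) -> m \in leaves t ->
  t \in ins m (del m t) -> y \in leaves (del m t) -> (y \in leaves t) && (y != m).
Proof.
move=> _ Hu _ Hi Hy; have P := ins_leaves _ _ _ Hi.
rewrite (ins_mem _ _ _ y Hi) Hy /=.
have := perm_uniq P; rewrite Hu rcons_uniq => /esym /andP [Hn _].
by apply: contraTneq Hy => ->.
Qed.

Lemma ins_head m u : Node u (Leaf m) \in ins m u.
Proof. by case: u => *; rewrite in_cons eqxx. Qed.

Lemma del_spec m t : isnode t -> canon t -> uniq (leaves t) -> m \in leaves t ->
  (forall y, y \in leaves t -> (y <= m)%N) ->
  canon (del m t) && (t \in ins m (del m t)).
Proof.
elim: t => [a|l IHl r IHr] //= _ /and3P [Hlt Hcl Hcr] Hu Hm Hle.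
have Hlel : forall y, y \in leaves l -> (y <= m)%N by move=> y Hy; apply: Hle; rewrite mem_cat Hy.
have Hler : forall y, y \in leaves r -> (y <= m)%N by move=> y Hy; apply: Hle; rewrite mem_cat Hy orbT.
move: Hu; rewrite cat_uniq => /and3P [Hul _ Hur].
have Hnl : (l == Leaf m) = false.
  apply/negbTE/eqP => E; move: Hlt; rewrite E.
  have -> : minleaf (Leaf m) = m by rewrite /minleaf /= minnn.
  by rewrite ltnNge (Hler _ (minleaf_in r)).
rewrite Hnl.
case: eqP => [->|Hnr]; first by rewrite Hcl ins_head.
case: ifP => Hml.
- have nl : isnode l by move: Hml Hnl; case: (l) => //= a; rewrite inE => /eqP->; rewrite eqxx.
  case/andP: (IHl nl Hcl Hul Hml Hlel) => Hc Hi.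
  have Emin : minleaf l = minleaf (del m l).
    apply: (minleaf_add _ _ m); first by move=> y; apply: ins_mem.
    move=> y Hy; case/andP: (del_mem _ _ y nl Hul Hml Hi Hy) => H1 H2.
    by rewrite ltn_neqAle H2 Hlel.
  rewrite /= -Emin Hlt Hc Hcr /= in_cons mem_cat.
  by rewrite (map_f (fun l' => Node l' r) Hi) orbT.
- have Hmr : m \in leaves r by move: Hm; rewrite mem_cat Hml.
  have nr : isnode r by move: Hmr Hnr; case: (r) => //= a; rewrite inE => /eqP->.
  case/andP: (IHr nr Hcr Hur Hmr Hler) => Hc Hi.
  have Emin : minleaf r = minleaf (del m r).
    apply: (minleaf_add _ _ m); first by move=> y; apply: ins_mem.
    move=> y Hy; case/andP: (del_mem _ _ y nr Hur Hmr Hi Hy) => H1 H2.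
    by rewrite ltn_neqAle H2 Hler.
  rewrite /= -Emin Hlt Hc Hcl /= in_cons mem_cat.
  by rewrite (map_f (fun r' => Node l r') Hi) !orbT.
Qed.

Lemma uniq_fm (S T : eqType) (f : S -> seq T) (g : T -> S) (s : seq S) :
  uniq s -> (forall x, x \in s -> uniq (f x)) ->
  (forall x z, x \in s -> z \in f x -> g z = x) -> uniq (flatten (map f s)).
Proof.
elim: s => [|a s IH] //= /andP [Has Hs] Hu Hg.
rewrite cat_uniq Hu ?inE ?eqxx // IH //; last 2 first.
- by move=> x Hx; apply: Hu; rewrite inE Hx orbT.
- by move=> x z Hx; apply: Hg; rewrite inE Hx orbT.
rewrite andbT; apply/hasPn => z /flatten_mapP [x Hx Hz]; apply/negP => Hza.
have E1 := Hg a z (mem_head _ _) Hza.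
have E2 : g z = x by apply: Hg Hz; rewrite inE Hx orbT.
by move: Has; rewrite -E1 E2 Hx.
Qed.

Lemma iota_rcons p : iota 1 p.+1 = rcons (iota 1 p) p.+1.
Proof. by have := iotaD 1 p 1; rewrite addn1 => ->; rewrite cats1 add1n. Qed.

Lemma perm_rcons2 (T : eqType) (a b : seq T) x :
  perm_eq (rcons a x) (rcons b x) = perm_eq a b.
Proof. by rewrite -!cats1 perm_cat2r. Qed.

Lemma gen_spec p : uniq (gen p.+1) /\ (forall t, (t \in gen p.+1) = in_Tn p.+1 t).
Proof.
elim: p => [|p [IHu IHm]].
  split=> // t; rewrite inE /in_Tn; case: t => [a|l r] /=.
    apply/eqP/andP => [[->]|[H _]]; first by split.
    by move/perm_mem: H => /(_ a); rewrite !inE eqxx => /esym /eqP ->.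
  apply/esym/negbTE; apply/negP => /andP [/perm_size] /=; rewrite size_cat.
  by have := leaves_size l; have := leaves_size r; case: (size (leaves l)) => [|[|?]] //; case: (size (leaves r)) => [|[|?]].
set m := p.+2.
have -> : gen p.+2 = flatten [seq ins m u | u <- gen p.+1] by [].
have Hmu : forall u, u \in gen p.+1 -> forall y, y \in leaves u -> (y < m)%N.
  move=> u; rewrite IHm => /andP [Hp _] y; rewrite (perm_mem Hp) mem_iota.
  by case/andP => _; rewrite add1n.
split.
  apply: (@uniq_fm _ _ (ins m) (del m)) => //.
  - move=> u Hu; apply: ins_uniq; apply/negP => /(Hmu _ Hu); by rewrite ltnn.
  - move=> u z Hu; apply: del_ins; apply/negP => /(Hmu _ Hu); by rewrite ltnn.
move=> t; apply/flatten_mapP/idP => [[u Hu Ht]|].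
  have := Hu; rewrite IHm => /andP [Hp Hc].
  rewrite /in_Tn (ins_canon _ _ _ Hc (Hmu _ Hu) Ht) andbT iota_rcons.
  apply: perm_trans (ins_leaves _ _ _ Ht) _; by rewrite perm_rcons2.
case/andP => Hp Hc.
have Hm : m \in leaves t by rewrite (perm_mem Hp) mem_iota add1n ltnSn andbT /m.
have Hu : uniq (leaves t) by rewrite (perm_uniq Hp) iota_uniq.
have Hle : forall y, y \in leaves t -> (y <= m)%N.
  by move=> y; rewrite (perm_mem Hp) mem_iota add1n => /andP [].
have Hn : isnode t by case: t Hp {Hc Hm Hu Hle} => // a /perm_size.
case/andP: (del_spec m t Hn Hc Hu Hm Hle) => Hcd Hi.
exists (del m t) => //; rewrite IHm /in_Tn Hcd andbT.
rewrite -(perm_rcons2 _ _ _ m) -iota_rcons.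
apply: perm_trans Hp; rewrite perm_sym; exact: ins_leaves Hi.
Qed.

Section IntPart.
Local Open Scope ring_scope.

Lemma sum_const_int (T : Type) (s : seq T) (c : int) :
  \sum_(t <- s) c = (size s)%:R * c.
Proof. elim: s => [|a s IH]; rewrite ?big_nil ?big_cons ?IH /= ?mul0r // -natr1; ring. Qed.

Lemma size_ins m u : (size (ins m u))%:R + 1 = 2 * (size (leaves u))%:R :> int.
Proof.
elim: u => [a|l IHl r IHr] //=.
rewrite size_cat !size_map size_cat -natr1 !natrD mulrDr -IHl -IHr; ring.
Qed.

Lemma ins_sum m x u (F : nat -> int) : x \in leaves u -> x != m ->
  \sum_(t <- ins m u) F (depth x t) =
  ((depth x u)%:R + 1) * F (depth x u).+1 +
  ((size (ins m u))%:R - (depth x u)%:R - 1) * F (depth x u).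
Proof.
elim: u F => [a|l IHl r IHr] F Hx Hxm.
  rewrite /= big_seq1 /= Hx /=; ring.
rewrite [ins _ _]/= big_cons big_cat !big_map /=.
rewrite [X in F X](_ : _ = (depth x (Node l r)).+1); last by rewrite /= Hx.
rewrite size_cat !size_map -natr1 natrD.
have Hx' : forall t, t \in ins m l -> (x \in leaves t) = (x \in leaves l).
  by move=> t Ht; rewrite (ins_mem _ _ _ x Ht) (negbTE Hxm) orbF.
case: ifP => Hxl.
- rewrite (eq_big_seq (fun t => F (depth x t).+1)); last first.
    by move=> t Ht; rewrite Hx' ?Hxl.
  rewrite (IHl (fun k => F k.+1)) // sum_const_int /= Hxl -natr1; ring.
- have Hxr : x \in leaves r by move: Hx; rewrite mem_cat Hxl.
  rewrite (eq_big_seq (fun t => F (depth x r).+1)) /=; last first.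
    by move=> t Ht; rewrite Hx' ?Hxl.
  rewrite (IHr (fun k => F k.+1)) // sum_const_int /= Hxl -natr1; ring.
Qed.

Definition M (F : nat -> int) p := \sum_(t <- gen p.+1) F (depth 1 t).

Lemma gen_step F p : M F p.+1 = \sum_(u <- gen p.+1)
  (((depth 1 u)%:R + 1) * F (depth 1 u).+1 + (2 * p%:R - (depth 1 u)%:R) * F (depth 1 u)).
Proof.
rewrite /M; have -> : gen p.+2 = flatten [seq ins p.+2 u | u <- gen p.+1] by [].
rewrite big_flatten big_map; apply: eq_big_seq => u Hu.
have := Hu; rewrite (proj2 (gen_spec p)) => /andP [Hp _].
rewrite ins_sum; last by []; last by rewrite (perm_mem Hp) mem_iota.
have Hs := size_ins p.+2 u; rewrite (perm_size Hp) size_iota in Hs.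
have -> : (size (ins p.+2 u))%:R = 2 * (p.+1)%:R - 1 :> int by rewrite -Hs; ring.
rewrite -natr1; ring.
Qed.

Definition F0 : nat -> int := fun _ => 1.
Definition F1 : nat -> int := fun k => k%:R.
Definition F2 : nat -> int := fun k => k%:R ^+ 2.

Lemma M0 p : M F0 p.+1 = (2 * p%:R + 1) * M F0 p.
Proof. rewrite gen_step /M mulr_sumr; apply: eq_bigr => u _; rewrite /F0; ring. Qed.

Lemma M1 p : M F1 p.+1 = (2 * p%:R + 2) * M F1 p + M F0 p.
Proof.
rewrite gen_step /M mulr_sumr -big_split; apply: eq_bigr => u _.
rewrite /= /F0 /F1 -natr1; ring.
Qed.

Lemma M2 p : M F2 p.+1 = (2 * p%:R + 3) * M F2 p + 3 * M F1 p + M F0 p.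
Proof.
rewrite gen_step /M !mulr_sumr -!big_split; apply: eq_bigr => u _.
rewrite /= /F0 /F1 /F2 -natr1; ring.
Qed.

Lemma dfo p : (dfact (2 * p.+1).-1 = (2 * p).+1 * dfact (2 * p).-1)%N.
Proof.
have -> : (2 * p.+1 = (2 * p).+2)%N by rewrite mulnS add2n.
case: p => [|q] //=.
Qed.

Lemma dfe p : (dfact (2 * p.+1) = (2 * p).+2 * dfact (2 * p))%N.
Proof. by have -> : (2 * p.+1 = (2 * p).+2)%N by rewrite mulnS add2n. Qed.

Definition oo p : int := (dfact (2 * p)%N.-1)%:R.
Definition ee p : int := (dfact (2 * p)%N)%:R.

Lemma closed p : [/\ M F0 p = oo p, M F1 p = ee p - oo p &
  M F2 p = (4 * p%:R + 3) * oo p - 3 * ee p].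
Proof.
elim: p => [|p [H0 H1 H2]].
  by rewrite /M /= !big_seq1 /F0 /F1 /F2 /oo /ee /=.
rewrite M0 M1 M2 H0 H1 H2 /oo /ee dfo dfe !natrM -!natr1 !natrM.
split; ring.
Qed.
End IntPart.

Lemma depth_lt x t : (depth x t < size (leaves t))%N.
Proof.
elim: t => [a|l IHl r IHr] //=; rewrite size_cat.
have := leaves_size l; have := leaves_size r.
case: ifP => _; move: IHl IHr; set a := depth x l; set b := depth x r;
  set c := size (leaves l); set d := size (leaves r); clearbody a b c d; lia.
Qed.

Lemma sum_ind n d : (\sum_(1 <= k < n) k ^ 2 * (d == k) = if d < n then d ^ 2 else 0)%N.
Proof.
elim: n => [|n IH]; first by rewrite big_geq.
case: n IH => [|n] IH.
  by rewrite big_geq //; case: (d).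
rewrite big_nat_recr // IH.
case: (ltngtP d n.+1) => H.
- by rewrite /= (ltn_trans H (ltnSn _)) muln0 addn0.
- by rewrite /= muln0 ltnNge H.
- by rewrite /= H ltnSn muln1.
Qed.

Lemma sum_count n s : (forall t, t \in s -> depth 1 t < n)%N ->
  (\sum_(1 <= k < n) k ^ 2 * dkn s k = \sum_(t <- s) (depth 1 t) ^ 2)%N.
Proof.
elim: s => [|a s IH] Hs.
  by rewrite big_nil big1 // => k _; rewrite /dkn /= muln0.
rewrite big_cons -IH; last by move=> t Ht; apply: Hs; rewrite inE Ht orbT.
rewrite /dkn /=; under eq_bigr => k _ do rewrite mulnDr.
by rewrite big_split /= sum_ind Hs ?mem_head.
Qed.

Local Open Scope ring_scope.

Theorem lemma11 (n : nat) (hn : (2 <= n)%N) :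
  (exists s, enum_Tn n s) /\
  forall s : seq tree, enum_Tn n s ->
    (\sum_(1 <= k < n) (k ^ 2 * dkn s k)%N)%:Z =
    ((4 * n - 1) * dfact (2 * n - 3))%N%:Z - (3 * dfact (2 * n - 2))%N%:Z.
Proof.
case: n hn => [//|p] hn.
split; first by exists (gen p.+1); case: (gen_spec p).
move=> s [Hus Hms].
have Hperm : perm_eq s (gen p.+1).
  by apply: uniq_perm => //; [case: (gen_spec p)| move=> t; rewrite Hms (proj2 (gen_spec p))].
rewrite sum_count; last first.
  move=> t; rewrite Hms => /andP [Hp _]; have := depth_lt 1 t.
  by rewrite (perm_size Hp) size_iota.
rewrite (perm_big _ Hperm) /= (big_morph Posz PoszD (erefl _)).
have -> : \sum_(t <- gen p.+1) Posz (depth 1 t ^ 2) = M F2 p.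
  by apply: eq_bigr => t _; rewrite /F2 -natz natrX.
case: (closed p) => _ _ ->.
have -> : (4 * p.+1 - 1 = 4 * p + 3)%N by lia.
have -> : (2 * p.+1 - 3 = (2 * p).-1)%N by lia.
have -> : (2 * p.+1 - 2 = 2 * p)%N by lia.
rewrite /oo /ee !PoszM -!natz natrD natrM.
by [].
Qed.
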